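(* Let $S$ be a finite $p$-group of nilpotency class two, let $T\trianglelefteq S$ with $T=T_1\times\cdots\times T_n$, where the $T_i$ are pairwise isomorphic groups of nilpotency class two. Suppose $s\in S\setminus T$ permutes the set $\{T_1,\dots,T_n\}$ by conjugation. Then $s$ normalizes each $T_i$. *)

(* Defs.v *)
From mathcomp Require Export all_boot all_fingroup all_solvable.
Set Implicit Arguments.
Unset Strict Implicit.
Unset Printing Implicit Defensive.

(* Main.v *)
Require Import Defs.
Import GroupScope.
Local Open Scope group_scope.

Theorem mainTheorem3 (gT : finGroupType) (p : nat) (S T : {group gT})
    (n : nat) (Ti : 'I_n -> {group gT}) (s : gT) :
  prime p -> p.-group S -> nil_class S = 2 ->
  T <| S ->
  \big[dprod/1]_(i < n) Ti i = T ->
  (forall i j, Ti i \isog Ti j) ->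
  (forall i, nil_class (Ti i) = 2) ->
  s \in S :\: T ->
  [set (Ti i :^ s) | i : 'I_n] = [set (Ti i : {set gT}) | i : 'I_n] ->
  forall i, s \in 'N(Ti i).
Proof.
move=> _ _ clS /andP[sTS _] defT _ clTi /setDP[Ss _] perm i.
have cHH : forall i j, i != j -> Ti i \subset 'C(Ti j).
  move=> a b ab.
  have /bigcprodYP H: \big[cprod/1]_(i < n) Ti i == (\prod_(i < n) Ti i)%G.
    by rewrite (bigdprodWcp defT) bigprodGE (bigdprodWY defT).
  exact: H.
have sTiS : Ti i \subset S.
  apply: subset_trans sTS; rewrite -(bigdprodWY defT).
  by apply: subset_trans (subset_gen _); rewrite (bigcup_max i).
have : Ti i :^ s \in [set (Ti i :^ s) | i : 'I_n] by apply: imset_f.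
rewrite perm => /imsetP[j _ Ej].
have [eij | nij] := eqVneq i j.
  by apply/normP; rewrite Ej -eij.
exfalso.
have nab : ~~ abelian (Ti i) by rewrite -nil_class1 clTi.
apply: (negP nab); apply/centsP => x Tx y Ty.
have cS : S^`(1) \subset 'Z(S) by rewrite -nil_class2 clS.
have xsS : x ^ s \in Ti j by rewrite -Ej memJ_conjg.
have Sy : y \in S by apply: (subsetP sTiS).
have Sx : x \in S by apply: (subsetP sTiS).
have zc : [~ x, s] \in 'Z(S) by apply: (subsetP cS); apply: mem_commg.
move: zc => /setIP[_ /centP cz].
have c1 : commute y [~ x, s] by apply: commute_sym; apply: cz.
have c2 : commute y (x ^ s).
  have : y \in 'C(Ti j) by apply: (subsetP (cHH i j nij)).
  by move/centP; apply.
have c3 : commute y x^-1.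
  have -> : x^-1 = [~ x, s] * (x ^ s)^-1 by rewrite /commg mulgK.
  by apply: commuteM => //; apply: commuteV.
apply: commute_sym; rewrite -[x]invgK; exact: commuteV.
Qed.
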